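(* Let $\mathcal{G}=(G,<,+,0,\ldots)$ be an o-minimal expansion of an ordered abelian group, let $M\subseteq G^m$ be a definable set that is not bounded and let $N\subseteq G^n$ be a bounded definable set. If there is a definable bijection between $M$ and $N$, then there exist a bounded definable set $D\subseteq G$ and a definable bijection $(0,+\infty)\to D$.
   Context: A definable set $M\subseteq G^n$ is bounded if $M\subseteq[b,b']^n$ for some $b,b'\in G$, where $[b,b']=\{t\in G\mid b\le t\le b'\}$; here $(0,+\infty)=\{t\in G\mid t>0\}$. *)

(* Defs.v *)
From HB Require Import structures.
From mathcomp Require Import all_boot all_order all_algebra.
From mathcomp Require Import boolp classical_sets.
Set Implicit Arguments. Unset Strict Implicit. Unset Printing Implicit Defensive.
Import GRing.Theory.
Local Open Scope ring_scope.
Local Open Scope classical_set_scope.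

Notation pt G n := ('I_n -> G).

Record oag_order (G : zmodType) (le : G -> G -> Prop) : Prop := {
  oag_refl : forall x, le x x;
  oag_antisym : forall x y, le x y -> le y x -> x = y;
  oag_trans : forall x y z, le x y -> le y z -> le x z;
  oag_total : forall x y, le x y \/ le y x;
  oag_add : forall x y z, le x y -> le (x + z) (y + z) }.

Definition ltG (G : zmodType) (le : G -> G -> Prop) (x y : G) : Prop :=
  le x y /\ x <> y.

Definition vcons (G : Type) (n : nat) (a : G) (x : pt G n) : pt G n.+1 :=
  fun i => match unlift ord0 i with None => a | Some j => x j end.
Definition vsnoc (G : Type) (n : nat) (x : pt G n) (a : G) : pt G n.+1 :=
  fun i => match unlift ord_max i with None => a | Some j => x j end.
Definition vcat (G : Type) (m n : nat) (x : pt G m) (y : pt G n) : pt G (m + n) :=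
  fun i => match split i with inl j => x j | inr k => y k end.

Definition pt1 (G : Type) (a : G) : pt G 1 := fun _ => a.
Definition pt2 (G : Type) (a b : G) : pt G 2 := vcons a (pt1 b).
Definition pt3 (G : Type) (a b c : G) : pt G 3 := vcons a (pt2 b c).

Definition open_interval (G : zmodType) (le : G -> G -> Prop) (a b : G) : set (pt G 1) :=
  [set x | ltG le a (x ord0) /\ ltG le (x ord0) b].
Definition open_ray_right (G : zmodType) (le : G -> G -> Prop) (a : G) : set (pt G 1) :=
  [set x | ltG le a (x ord0)].
Definition open_ray_left (G : zmodType) (le : G -> G -> Prop) (b : G) : set (pt G 1) :=
  [set x | ltG le (x ord0) b].

(* An o-minimal expansion of the ordered abelian group (G, le, +, 0):
   a structure in the sense of van den Dries (definable sets with parameters),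
   containing the order, the graph of addition and all points, whose
   definable subsets of G are finite unions of points and open intervals
   (intervals possibly unbounded). *)
Record ominimal_expansion (G : zmodType) (le : G -> G -> Prop) := {
  definable : forall n : nat, set (pt G n) -> Prop;
  def_setT : forall n, definable (@setT (pt G n));
  def_setC : forall n (A : set (pt G n)), definable A -> definable (~` A);
  def_setU : forall n (A B : set (pt G n)), definable A -> definable B ->
     definable (A `|` B);
  def_prodl : forall n (A : set (pt G n)), definable A ->
     definable [set x : pt G n.+1 | exists a y, x = vcons a y /\ A y];
  def_prodr : forall n (A : set (pt G n)), definable A ->
     definable [set x : pt G n.+1 | exists y a, x = vsnoc y a /\ A y];
  def_diag : forall n, definable [set x : pt G n.+2 | x ord0 = x ord_max];
  def_proj : forall n (A : set (pt G n.+1)), definable A ->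
     definable [set y : pt G n | exists a, A (vsnoc y a)];
  def_point : forall a : G, definable [set pt1 a];
  def_lt : definable [set x : pt G 2 | exists a b, x = pt2 a b /\ ltG le a b];
  def_add : definable [set x : pt G 3 | exists a b, x = pt3 a b (a + b)];
  ominimal : forall A : set (pt G 1), definable A ->
     exists (ps : seq G) (ivs : seq (option G * option G)),
       A = [set x | (x ord0 \in ps) \/
              exists2 iv, iv \in ivs &
                match iv with
                | (Some a, Some b) => open_interval le a b x
                | (Some a, None) => open_ray_right le a x
                | (None, Some b) => open_ray_left le b x
                | (None, None) => True
                end] }.

Definition bounded_set (G : zmodType) (le : G -> G -> Prop) (n : nat)
  (M : set (pt G n)) : Prop :=
  exists b b' : G, forall x, M x -> forall i, le b (x i) /\ le (x i) b'.

Definition graph_on (G : Type) (m n : nat) (M : set (pt G m))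
  (f : pt G m -> pt G n) : set (pt G (m + n)) :=
  [set z | exists2 x, M x & z = vcat x (f x)].

Definition definable_bijection (G : zmodType) (le : G -> G -> Prop)
  (S : ominimal_expansion le) (m n : nat) (M : set (pt G m)) (N : set (pt G n))
  (f : pt G m -> pt G n) : Prop :=
  definable S (graph_on M f) /\ {in M &, injective f} /\ f @` M = N.

(* Main.v *)
Require Import Defs.
From HB Require Import structures.
From mathcomp Require Import all_boot all_order all_algebra.
From mathcomp Require Import boolp classical_sets.
From mathcomp Require Import zify.
Set Implicit Arguments. Unset Strict Implicit. Unset Printing Implicit Defensive.
Import GRing.Theory.
Local Open Scope ring_scope.
Local Open Scope classical_set_scope.


Section Basic.
Variable (G : zmodType) (le : G -> G -> Prop) (S : ominimal_expansion le).

Definition Dfn n (P : pt G n -> Prop) := definable S [set x | P x].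

Lemma Dfn_ext n (P Q : pt G n -> Prop) : (forall x, P x <-> Q x) -> Dfn P -> Dfn Q.
Proof.
move=> H; rewrite /Dfn; have -> : [set x | Q x] = [set x | P x]; last by [].
by apply/seteqP; split=> x /= /H.
Qed.

Lemma Dfn_true n : Dfn (fun _ : pt G n => True).
Proof. exact: def_setT. Qed.

Lemma Dfn_not n (P : pt G n -> Prop) : Dfn P -> Dfn (fun x => ~ P x).
Proof. by move=> H; apply: (def_setC H). Qed.

Lemma Dfn_or n (P Q : pt G n -> Prop) : Dfn P -> Dfn Q -> Dfn (fun x => P x \/ Q x).
Proof. by move=> H1 H2; apply: (def_setU H1 H2). Qed.

Lemma Dfn_and n (P Q : pt G n -> Prop) : Dfn P -> Dfn Q -> Dfn (fun x => P x /\ Q x).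
Proof.
move=> H1 H2; apply: (Dfn_ext _ (Dfn_not (Dfn_or (Dfn_not H1) (Dfn_not H2)))).
move=> x; split; last by move=> [? ?] [].
by move=> H; split; apply: contrapT => ?; apply: H; [left|right].
Qed.

Lemma Dfn_false n : Dfn (fun _ : pt G n => False).
Proof. by apply: (Dfn_ext _ (Dfn_not (@Dfn_true n))) => x; split => // /(_ I). Qed.

Lemma Dfn_const n (P : Prop) : Dfn (fun _ : pt G n => P).
Proof.
case: (pselect P) => HP.
  by apply: (Dfn_ext _ (@Dfn_true n)).
by apply: (Dfn_ext _ (@Dfn_false n)).
Qed.

Lemma vcons_eta n (x : pt G n.+1) : x = vcons (x ord0) (fun i => x (lift ord0 i)).
Proof.
apply: funext => i; rewrite /vcons; case: unliftP => [j ->|->] //.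
Qed.

Lemma vcons_lift n a (x : pt G n) i : vcons a x (lift ord0 i) = x i.
Proof. by rewrite /vcons liftK. Qed.

Lemma vcons0 n a (x : pt G n) : vcons a x ord0 = a.
Proof. by rewrite /vcons unlift_none. Qed.

Lemma vsnoc_eta n (x : pt G n.+1) : x = vsnoc (fun i => x (lift ord_max i)) (x ord_max).
Proof.
apply: funext => i; rewrite /vsnoc; case: unliftP => [j ->|->] //.
Qed.

Lemma vsnoc_lift n a (x : pt G n) i : vsnoc x a (lift ord_max i) = x i.
Proof. by rewrite /vsnoc liftK. Qed.

Lemma vsnoc_max n a (x : pt G n) : vsnoc x a ord_max = a.
Proof. by rewrite /vsnoc unlift_none. Qed.

Lemma vcat_l m n (x : pt G m) (y : pt G n) i : vcat x y (lshift n i) = x i.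
Proof. by rewrite /vcat (unsplitK (inl i)). Qed.

Lemma vcat_r m n (x : pt G m) (y : pt G n) i : vcat x y (rshift m i) = y i.
Proof. by rewrite /vcat (unsplitK (inr i)). Qed.

Lemma Dfn_prodl n (P : pt G n -> Prop) : Dfn P ->
  Dfn (fun x : pt G n.+1 => P (fun i => x (lift ord0 i))).
Proof.
move=> H; apply: (Dfn_ext _ (def_prodl H)) => x /=; split.
  by move=> [a [y [-> Py]]]; under eq_fun do rewrite vcons_lift.
move=> Px; exists (x ord0), (fun i => x (lift ord0 i)); split => //.
exact: vcons_eta.
Qed.

Lemma Dfn_prodr n (P : pt G n -> Prop) : Dfn P ->
  Dfn (fun x : pt G n.+1 => P (fun i => x (lift ord_max i))).
Proof.
move=> H; apply: (Dfn_ext _ (def_prodr H)) => x /=; split.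
  by move=> [y [a [-> Py]]]; under eq_fun do rewrite vsnoc_lift.
move=> Px; exists (fun i => x (lift ord_max i)), (x ord_max); split => //.
exact: vsnoc_eta.
Qed.

Lemma Dfn_proj n (P : pt G n.+1 -> Prop) : Dfn P ->
  Dfn (fun y : pt G n => exists a, P (vsnoc y a)).
Proof. by move=> H; apply: (Dfn_ext _ (def_proj H)). Qed.


Lemma Dfn_diag N (i j : 'I_N) : Dfn (fun w : pt G N => w i = w j).
Proof.
elim: N i j => [|N IH] i j; first by case: i.
case: (eqVneq i j) => [->|ij].
  by apply: Dfn_ext (@Dfn_true _) => x.
case: (unliftP ord_max i) => [i' Ei|Ei]; case: (unliftP ord_max j) => [j' Ej|Ej].
- by rewrite Ei Ej; apply: (Dfn_prodr (IH i' j')).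
- revert IH i j ij i' Ei Ej; case: N => [|p] IH i j ij i' Ei Ej; first by have := ltn_ord i'.
  case: (unliftP ord0 i) => [i'' Ei2|Ei2].
    have Ej2 : j = lift ord0 (ord_max : 'I_p.+1) by rewrite Ej; apply: val_inj.
    by rewrite Ei2 Ej2; apply: (Dfn_prodl (IH i'' ord_max)).
  by rewrite Ei2 Ej; exact: (def_diag S p).
- revert IH i j ij j' Ej Ei; case: N => [|p] IH i j ij j' Ej Ei; first by have := ltn_ord j'.
  case: (unliftP ord0 j) => [j'' Ej2|Ej2].
    have Ei2 : i = lift ord0 (ord_max : 'I_p.+1) by rewrite Ei; apply: val_inj.
    by rewrite Ei2 Ej2; apply: (Dfn_prodl (IH ord_max j'')).
  rewrite Ej2 Ei; apply: Dfn_ext (def_diag S p) => x; split => /esym //.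
- by move: ij; rewrite Ei Ej eqxx.
Qed.

Lemma Dfn_shiftl k m (P : pt G m -> Prop) : Dfn P ->
  Dfn (fun w : pt G (k + m) => P (fun i => w (rshift k i))).
Proof.
move=> H; elim: k => [|k IH].
  apply: Dfn_ext H => x.
  by have -> : (fun i => x (rshift 0 i)) = x by apply: funext => i; congr x; apply: val_inj.
apply: Dfn_ext (Dfn_prodl IH) => x.
have -> // : (fun i => x (lift ord0 (rshift k i))) = (fun i => x (rshift k.+1 i)).
by apply: funext => i; congr x; apply: val_inj.
Qed.

Lemma Dfn_cast n n' (e : n = n') (P : pt G n -> Prop) : Dfn P ->
  Dfn (fun x : pt G n' => P (fun i => x (cast_ord e i))).
Proof.
case: n' / e => H; apply: Dfn_ext H => x.
by have -> : (fun i => x (cast_ord erefl i)) = x by apply: funext => i; rewrite cast_ord_id.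
Qed.

Lemma vsnoc_v n (x : pt G n) a (i : 'I_n.+1) (j : 'I_n) : (i : nat) = j -> vsnoc x a i = x j.
Proof.
move=> h; have -> : i = lift ord_max j.
  by apply: val_inj; rewrite /= /bump leqNgt ltn_ord h.
exact: vsnoc_lift.
Qed.

Lemma vsnoc_vmax n (x : pt G n) a (i : 'I_n.+1) : (i : nat) = n -> vsnoc x a i = a.
Proof.
move=> h; have -> : i = ord_max by apply: val_inj.
exact: vsnoc_max.
Qed.

Lemma vcat_vl m n (x : pt G m) (y : pt G n) (i : 'I_(m + n)) (j : 'I_m) :
  (i : nat) = j -> vcat x y i = x j.
Proof. move=> h; have -> : i = lshift n j by apply: val_inj.
exact: vcat_l. Qed.

Lemma vcat_vr m n (x : pt G m) (y : pt G n) (i : 'I_(m + n)) (j : 'I_n) :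
  (i : nat) = (m + j)%N -> vcat x y i = y j.
Proof. move=> h; have -> : i = rshift m j by apply: val_inj.
exact: vcat_r. Qed.

Arguments vsnoc_v {n x a i} j _.
Arguments vcat_vl {m n x y i} j _.
Arguments vcat_vr {m n x y i} j _.

Lemma Dfn_projn k m (Q : pt G (k + m) -> Prop) : Dfn Q ->
  Dfn (fun y : pt G k => exists z : pt G m, Q (vcat y z)).
Proof.
elim: m Q => [|m IH] Q H.
  apply: Dfn_ext (Dfn_cast (addn0 k) H) => y.
  have ID : forall z : pt G 0, vcat y z = (fun i => y (cast_ord (addn0 k) i)).
    move=> z; apply: funext => i.
    have h : (i < k)%N by have := ltn_ord i; lia.
    by rewrite (vcat_vl (Ordinal h)) //; congr y; apply: val_inj.
  by split => [Hy|[z]]; [exists (fun _ => 0); rewrite ID | rewrite ID].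
pose Q' := fun w : pt G (k + m).+1 => Q (fun i => w (cast_ord (addnS k m) i)).
have H' : Dfn Q' by apply: Dfn_cast.
have H2 := IH _ (Dfn_proj H').
apply: Dfn_ext H2 => y.
have ID : forall z' a, (fun i => vsnoc (vcat y z') a (cast_ord (addnS k m) i)) = vcat y (vsnoc z' a).
  move=> z' a; apply: funext => i; have hi := ltn_ord i.
  case: (ltnP i k) => h.
    have h3 : (i < k + m)%N by lia.
    rewrite (vcat_vl (Ordinal h)) // (vsnoc_v (Ordinal h3)) //.
    by rewrite (vcat_vl (Ordinal h)).
  have h4 : (i - k < m.+1)%N by lia.
  rewrite (vcat_vr (Ordinal h4)) /=; last by lia.
  case: (ltnP (i - k) m) => h2.
    have h3 : (i < k + m)%N by lia.
    rewrite (vsnoc_v (Ordinal h3)) // (vsnoc_v (Ordinal h2)) //.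
    by rewrite (vcat_vr (Ordinal h2)) //= ; lia.
  by rewrite !vsnoc_vmax //=; lia.
split.
  by move=> [z' [a]]; rewrite /Q' ID => ?; exists (vsnoc z' a).
move=> [z Hz]; exists (fun i => z (lift ord_max i)), (z ord_max).
by rewrite /Q' ID -vsnoc_eta.
Qed.

Lemma Dfn_all n (I : finType) (P : I -> pt G n -> Prop) :
  (forall i, Dfn (P i)) -> Dfn (fun x => forall i, P i x).
Proof.
move=> H.
suff: forall s : seq I, Dfn (fun x => forall i, i \in s -> P i x).
  move=> /(_ (enum I)); apply: Dfn_ext => x; split => Hx i.
    by apply: Hx; rewrite mem_enum.
  by move=> _; apply: Hx.
elim => [|a s IH].
  by apply: Dfn_ext (@Dfn_true _) => x; split => // _ i; rewrite in_nil.
apply: Dfn_ext (Dfn_and (H a) IH) => x; split.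
  by move=> [Ha Hs] i; rewrite inE => /orP [/eqP ->|] //; apply: Hs.
by move=> Hx; split; [apply: Hx; rewrite inE eqxx | move=> i Hi; apply: Hx; rewrite inE Hi orbT].
Qed.

Lemma Dfn_subst n k (s : 'I_n -> 'I_k) (P : pt G n -> Prop) : Dfn P ->
  Dfn (fun y : pt G k => P (fun i => y (s i))).
Proof.
move=> H.
pose Q := fun u : pt G (k + n) => P (fun i => u (rshift k i)) /\
   forall i, u (lshift n (s i)) = u (rshift k i).
have HQ : Dfn Q.
  apply: Dfn_and; first exact: Dfn_shiftl.
  by apply: Dfn_all => i; apply: Dfn_diag.
apply: Dfn_ext (Dfn_projn HQ) => y; rewrite /Q; split.
  move=> [z [Hz1 Hz2]].
  have -> : (fun i => y (s i)) = z.
    by apply: funext => i; have := Hz2 i; rewrite vcat_l vcat_r.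
  by move: Hz1; under eq_fun do rewrite vcat_r.
move=> Hy; exists (fun i => y (s i)); split.
  by under eq_fun do rewrite vcat_r.
by move=> i; rewrite vcat_l vcat_r.
Qed.

End Basic.
Arguments vsnoc_v {G n x a i} j _.
Arguments vcat_vl {G m n x y i} j _.
Arguments vcat_vr {G m n x y i} j _.


Section Fm.
Variable (G : zmodType) (le : G -> G -> Prop) (S : ominimal_expansion le).

Inductive fm : Type :=
| FAtom (n : nat) (A : pt G n -> Prop) of Dfn S A & ('I_n -> nat)
| FNeg of fm
| FOr of fm & fm
| FAnd of fm & fm
| FImp of fm & fm
| FEx of nat & fm
| FAll of nat & fm.

Definition upd (e : nat -> G) (k : nat) (a : G) := fun j : nat => if j == k then a else e j.

Fixpoint eval (e : nat -> G) (f : fm) : Prop :=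
  match f with
  | FAtom n A _ v => A (fun i => e (v i))
  | FNeg f => ~ eval e f
  | FOr f g => eval e f \/ eval e g
  | FAnd f g => eval e f /\ eval e g
  | FImp f g => eval e f -> eval e g
  | FEx k f => exists a, eval (upd e k a) f
  | FAll k f => forall a, eval (upd e k a) f
  end.

Lemma Dfn_imp n (P Q : pt G n -> Prop) : Dfn S P -> Dfn S Q -> Dfn S (fun x => P x -> Q x).
Proof.
move=> H1 H2; apply: Dfn_ext (Dfn_or (Dfn_not H1) H2) => x; split.
  by move=> [] // H /H.
by move=> H; case: (pselect (P x)) => h; [right; apply: H| left].
Qed.

Lemma fm_dfn f : forall n (r : nat -> 'I_n), Dfn S (fun x => eval (fun j => x (r j)) f).
Proof.
elim: f => [n A HA v|f IH|f IH g IH'|f IH g IH'|f IH g IH'|k f IH|k f IH] m r /=.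
- exact: (Dfn_subst (fun i => r (v i)) HA).
- exact: Dfn_not.
- exact: Dfn_or.
- exact: Dfn_and.
- exact: Dfn_imp.
- pose r' := fun j => if j == k then ord_max else lift ord_max (r j).
  apply: Dfn_ext (Dfn_proj (IH m.+1 r')) => y.
  have ID : forall a, (fun j => vsnoc y a (r' j)) = upd (fun j => y (r j)) k a.
    move=> a; apply: funext => j; rewrite /r' /upd; case: (j == k).
      exact: vsnoc_max.
    exact: vsnoc_lift.
  by split => -[a Ha]; exists a; rewrite ?ID // -ID.
- pose r' := fun j => if j == k then ord_max else lift ord_max (r j).
  apply: Dfn_ext (Dfn_not (Dfn_proj (Dfn_not (IH m.+1 r')))) => y.
  have ID : forall a, (fun j => vsnoc y a (r' j)) = upd (fun j => y (r j)) k a.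
    move=> a; apply: funext => j; rewrite /r' /upd; case: (j == k).
      exact: vsnoc_max.
    exact: vsnoc_lift.
  split.
    by move=> H a; apply: contrapT => Ha; apply: H; exists a; rewrite ID.
  by move=> H [a]; rewrite ID; apply.
Qed.

Definition D1 (P : G -> Prop) := Dfn S (fun w : pt G 1 => P (w ord0)).
Definition D2 (R : G -> G -> Prop) := Dfn S (fun w : pt G 2 => R (w ord0) (w ord_max)).

Lemma pt1_eta (x : pt G 1) : x = pt1 (x ord0).
Proof. by apply: funext => i; rewrite ord1. Qed.

Lemma pt2_eta (x : pt G 2) : x = pt2 (x ord0) (x ord_max).
Proof.
rewrite {1}(vcons_eta x) /pt2; congr vcons; apply: funext => i.
by rewrite ord1 /pt1; congr x; apply: val_inj.
Qed.

Lemma D_eq : Dfn S (fun w : pt G 2 => w ord0 = w ord_max).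
Proof. exact: (def_diag S 0). Qed.

Lemma D_lt : Dfn S (fun w : pt G 2 => ltG le (w ord0) (w ord_max)).
Proof.
apply: Dfn_ext (def_lt S) => x /=; split.
  move=> [a [b [-> H]]]; rewrite /pt2 vcons0.
  have -> : (ord_max : 'I_2) = lift ord0 ord0 by apply: val_inj.
  by rewrite vcons_lift.
by move=> H; exists (x ord0), (x ord_max); split => //; apply: pt2_eta.
Qed.

Definition i3_1 : 'I_3 := lift ord0 ord0.
Definition i3_2 : 'I_3 := lift ord0 (lift ord0 ord0).

Lemma D_add : Dfn S (fun w : pt G 3 => w ord0 + w i3_1 = w i3_2).
Proof.
apply: Dfn_ext (def_add S) => x /=; split.
  by move=> [a [b ->]]; rewrite /pt3 /pt2 /i3_1 /i3_2 vcons0 !vcons_lift vcons0 /pt1.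
move=> H; exists (x ord0), (x i3_1); rewrite H.
apply: funext => i; rewrite /pt3 /pt2 /pt1.
case: (unliftP ord0 i) => [j ->|->]; last by rewrite vcons0.
rewrite vcons_lift; case: (unliftP ord0 j) => [k ->|->]; last by rewrite vcons0.
by rewrite vcons_lift ord1.
Qed.

Lemma D_const (c : G) : Dfn S (fun w : pt G 1 => w ord0 = c).
Proof.
apply: Dfn_ext (def_point S c) => x /=; split; first by move=> ->.
by move=> H; rewrite (pt1_eta x) H.
Qed.

Definition aEq i j := FAtom D_eq (fun t => nth 0%N [:: i; j] t).
Definition aLt i j := FAtom D_lt (fun t => nth 0%N [:: i; j] t).
Definition aAdd i j k := FAtom D_add (fun t => nth 0%N [:: i; j; k] t).
Definition aConst i c := FAtom (D_const c) (fun _ => i).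
Definition aR1 (P : G -> Prop) (H : D1 P) i := FAtom H (fun _ => i).
Definition aR2 (R : G -> G -> Prop) (H : D2 R) i j := FAtom H (fun t => nth 0%N [:: i; j] t).

Definition r1 : nat -> 'I_1 := fun _ => ord0.
Definition r2 : nat -> 'I_2 := fun j => if j == 0%N then ord0 else ord_max.

Lemma D1_fm (P : G -> Prop) f : (forall t, eval (fun _ => t) f <-> P t) -> D1 P.
Proof. by move=> H; apply: Dfn_ext (fm_dfn f r1) => x; exact: (H (x ord0)). Qed.

Lemma D2_fm (R : G -> G -> Prop) f :
  (forall t u, eval (fun j => if j == 0%N then t else u) f <-> R t u) -> D2 R.
Proof.
move=> H; apply: Dfn_ext (fm_dfn f r2) => x.
have -> : (fun j => x (r2 j)) = (fun j => if j == 0%N then x ord0 else x ord_max).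
  by apply: funext => j; rewrite /r2; case: (j == 0%N).
exact: (H (x ord0) (x ord_max)).
Qed.

Lemma D2_fix1 R (H : D2 R) c : D1 (R c).
Proof.
apply: (@D1_fm _ (FEx 5 (FAnd (aConst 5 c) (aR2 H 5 0)))) => t /=; split.
  by move=> [a []]; rewrite /upd /= => ->.
by move=> h; exists c.
Qed.

Lemma D2_fix2 R (H : D2 R) c : D1 (fun t => R t c).
Proof.
apply: (@D1_fm _ (FEx 5 (FAnd (aConst 5 c) (aR2 H 0 5)))) => t /=; split.
  by move=> [a []]; rewrite /upd /= => ->.
by move=> h; exists c.
Qed.

End Fm.


Section Ord.
Variable (G : zmodType) (le : G -> G -> Prop) (Hle : oag_order le).
Local Notation lt := (ltG le).

Lemma le_refl x : le x x. Proof. exact: (oag_refl Hle x). Qed.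
Lemma le_trans x y z : le x y -> le y z -> le x z. Proof. exact: (oag_trans Hle). Qed.
Lemma le_anti x y : le x y -> le y x -> x = y. Proof. exact: (oag_antisym Hle). Qed.
Lemma le_total x y : le x y \/ le y x. Proof. exact: (oag_total Hle). Qed.
Lemma lt_le x y : lt x y -> le x y. Proof. by case. Qed.
Lemma lt_irr x : ~ lt x x. Proof. by case. Qed.
Lemma not_lt x y : ~ lt x y <-> le y x.
Proof.
split.
  move=> H; case: (le_total x y) => // h; case: (pselect (x = y)) => [->|ne].
    exact: le_refl.
  by exfalso; apply: H.
by move=> h [h1 h2]; apply: h2; apply: le_anti.
Qed.
Lemma not_le x y : ~ le x y <-> lt y x.
Proof.
split.
  by move=> H; apply: contrapT => /not_lt.
by move=> h h1; exact: (proj2 (not_lt y x) h1 h).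
Qed.
Lemma le_lt_trans x y z : le x y -> lt y z -> lt x z.
Proof.
move=> h1 [h2 h3]; split; first exact: le_trans h1 h2.
by move=> e; subst; apply: h3; apply: le_anti.
Qed.
Lemma lt_le_trans x y z : lt x y -> le y z -> lt x z.
Proof.
move=> [h1 h3] h2; split; first exact: le_trans h1 h2.
by move=> e; subst; apply: h3; apply: le_anti.
Qed.
Lemma lt_trans x y z : lt x y -> lt y z -> lt x z.
Proof. by move=> h1 h2; apply: lt_le_trans h1 (lt_le h2). Qed.
Lemma lt_total x y : lt x y \/ x = y \/ lt y x.
Proof.
case: (pselect (x = y)) => [->|ne]; first by right; left.
case: (le_total x y) => h; [left|right; right]; split => //.
by move=> e; apply: ne.
Qed.

Lemma le_add2r x y z : le x y -> le (x + z) (y + z).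
Proof. exact: (oag_add Hle). Qed.
Lemma le_add2r_iff x y z : le (x + z) (y + z) <-> le x y.
Proof.
split; last exact: le_add2r.
by move=> /(le_add2r (- z)); rewrite !addrK.
Qed.
Lemma lt_add2r x y z : lt x y -> lt (x + z) (y + z).
Proof. by move=> [h1 h2]; split; [apply: le_add2r | move=> /addIr]. Qed.
Lemma lt_add2r_iff x y z : lt (x + z) (y + z) <-> lt x y.
Proof.
split; last exact: lt_add2r.
by move=> /(lt_add2r (- z)); rewrite !addrK.
Qed.
Lemma le_add2l x y z : le x y -> le (z + x) (z + y).
Proof. by rewrite ![z + _]addrC; apply: le_add2r. Qed.
Lemma lt_add2l x y z : lt x y -> lt (z + x) (z + y).
Proof. by rewrite ![z + _]addrC; apply: lt_add2r. Qed.
Lemma le_opp x y : le x y -> le (- y) (- x).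
Proof.
move=> /(le_add2r (- x - y)).
by rewrite addrA subrr add0r addrCA subrr addr0.
Qed.
Lemma lt_opp x y : lt x y -> lt (- y) (- x).
Proof.
move=> /(lt_add2r (- x - y)).
by rewrite addrA subrr add0r addrCA subrr addr0.
Qed.
Lemma lt_addp x d : lt 0 d -> lt x (x + d).
Proof. by move=> /(lt_add2l x); rewrite addr0. Qed.
Lemma le_addp x d : le 0 d -> le x (x + d).
Proof. by move=> /(le_add2l x); rewrite addr0. Qed.
Lemma lt_subp x d : lt 0 d -> lt (x - d) x.
Proof. by move=> /(lt_add2l (x - d)); rewrite addr0 subrK. Qed.
Lemma lt_0sub x y : lt x y -> lt 0 (y - x).
Proof. by move=> /(lt_add2r (- x)); rewrite subrr. Qed.

Lemma max_ex x y : exists z, le x z /\ le y z /\ (z = x \/ z = y).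
Proof.
case: (le_total x y) => h; [exists y | exists x]; do !split => //; by [apply: le_refl|right|left].
Qed.
Lemma min_ex x y : exists z, le z x /\ le z y /\ (z = x \/ z = y).
Proof.
case: (le_total x y) => h; [exists x | exists y]; do !split => //; by [apply: le_refl|right|left].
Qed.

Lemma ub_seq (s : seq G) : exists B, forall x, x \in s -> le x B.
Proof.
elim: s => [|a s [B HB]]; first by exists 0.
have [z [h1 [h2 _]]] := max_ex a B; exists z => x; rewrite inE => /orP [/eqP ->//|/HB h].
exact: le_trans h h2.
Qed.

Lemma ub_oseq (s : seq (option G)) : exists B, forall x, Some x \in s -> le x B.
Proof.
elim: s => [|a s [B HB]]; first by exists 0.
case: a => [a|].
  have [z [h1 [h2 _]]] := max_ex a B; exists z => x; rewrite inE => /orP [/eqP [->]//|/HB h].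
  exact: le_trans h h2.
by exists B => x; rewrite inE => /orP [//|/HB].
Qed.

End Ord.


Section Omin.
Variable (G : zmodType) (le : G -> G -> Prop) (Hle : oag_order le) (S : ominimal_expansion le).
Local Notation lt := (ltG le).
Local Notation D1 := (D1 S).
Local Notation D2 := (D2 S).

Definition inI (iv : option G * option G) t :=
  (if iv.1 is Some a then lt a t else True) /\ (if iv.2 is Some b then lt t b else True).

Lemma decomp P : D1 P -> exists (ps : seq G) (ivs : seq (option G * option G)), forall t,
  P t <-> (t \in ps \/ exists2 iv, iv \in ivs & inI iv t).
Proof.
move=> H; have [ps [ivs E]] := ominimal H; exists ps, ivs => t.
have /= -> := congr1 (fun A => A (pt1 t)) E.
split; case=> [h|[iv Hiv h]]; (try by left); right; exists iv => //;
  by move: h; case: iv {Hiv} => [[a|] [b|]]; rewrite /inI /=; firstorder.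
Qed.

Lemma ray P : D1 P -> (forall B, exists t, P t /\ lt B t) ->
  exists c, forall t, lt c t -> P t.
Proof.
move=> /decomp [ps [ivs E]] Hub.
case: (pselect (exists2 iv, iv \in ivs & iv.2 = None)) => [[iv Hiv H2]|Hno].
  exists (if iv.1 is Some a then a else 0) => t ht; apply/E; right; exists iv => //.
  by rewrite /inI H2; split => //; case: iv.1 ht.
have [B1 HB1] := ub_seq Hle ps.
have [B2 HB2] := ub_oseq Hle (map snd ivs).
have [B [h1 [h2 _]]] := max_ex Hle B1 B2.
have [t [/E [ht|[iv Hiv [_ h3]]] hBt]] := Hub B.
  by exfalso; apply: (lt_irr (le:=le) (x := t)); apply: (le_lt_trans Hle (le_trans Hle (HB1 _ ht) h1)).
case E2 : iv.2 h3 => [b|] h3; last by exfalso; apply: Hno; exists iv.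
have hb : le b B2 by apply: HB2; rewrite -E2; apply: map_f.
exfalso; apply: (lt_irr (le:=le) (x := t)); apply: (lt_trans Hle h3).
exact: (le_lt_trans Hle (le_trans Hle hb h2) hBt).
Qed.

Lemma ray_or_bdd P : D1 P ->
  (exists c, forall t, lt c t -> P t) \/ (exists B, forall t, P t -> le t B).
Proof.
move=> H; case: (pselect (forall B, exists t, P t /\ lt B t)) => h.
  by left; apply: ray.
right; apply: contrapT => h2; apply: h => B; apply: contrapT => h3; apply: h2.
exists B => t Pt; apply/(not_lt Hle) => hBt; apply: h3; by exists t.
Qed.


Lemma dense a b : lt a b -> exists z, lt a z /\ lt z b.
Proof.
move=> hab; apply: contrapT => Hno.
have Hd : forall d, lt 0 d -> ~ lt d (b - a).
  move=> d h1 h2; apply: Hno; exists (a + d); split; first exact: (lt_addp Hle a h1).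
  by have := lt_add2l Hle a h2; rewrite [a + (b - a)]addrC subrK.
move: (b - a) (lt_0sub Hle hab) Hd => e he Hd.
have DE : D1 (fun t => exists y, y + y = t).
  by apply: (@D1_fm _ _ S _ (FEx 5 (aAdd S 5 5 0))) => t /=; split => -[y h]; exists y; exact: h.
have [c Hc] : exists c, forall t, lt c t -> exists y, y + y = t.
  apply: (ray DE) => B.
  have [w [h1 [h2 _]]] := max_ex Hle B e.
  have hw : lt 0 w by apply: (lt_le_trans Hle he h2).
  exists (w + w); split; first by exists w.
  exact: (le_lt_trans Hle h1 (lt_addp Hle w hw)).
have [y Hy] := Hc (c + e) (lt_addp Hle c he).
have [z Hz] := Hc (c + e + e) (lt_trans Hle (lt_addp Hle c he) (lt_addp Hle (c + e) he)).
have Ed : e = (z - y) + (z - y).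
  by rewrite addrACA -opprD Hz Hy addrAC subrr add0r.
case: (pselect (lt 0 (z - y))) => hd.
  have h1 := proj1 (not_lt Hle _ _) (Hd _ hd).
  have h2 := le_add2r Hle (z - y) h1; rewrite -Ed in h2.
  exact: (lt_irr (le:=le) (lt_le_trans Hle (lt_addp Hle e hd) h2)).
have h1 := proj1 (not_lt Hle _ _) hd.
have h2 := le_add2r Hle (z - y) h1; rewrite -Ed add0r in h2.
exact: (lt_irr (le:=le) (lt_le_trans Hle he (le_trans Hle h2 h1))).
Qed.

Variable (e0 : G) (He0 : lt 0 e0).

Definition Loc (Q : G -> Prop) a := exists u, lt a u /\
  ((forall z, lt a z -> lt z u -> Q z) \/ (forall z, lt a z -> lt z u -> ~ Q z)).

Lemma Loc_ext Q Q' a : (forall t, Q t <-> Q' t) -> Loc Q a -> Loc Q' a.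
Proof.
move=> E [u [hu [H|H]]]; exists u; split => //; [left|right] => z h1 h2.
  by apply/E; apply: H.
by move=> /E; apply: H.
Qed.

Lemma Loc_or Q1 Q2 a : Loc Q1 a -> Loc Q2 a -> Loc (fun t => Q1 t \/ Q2 t) a.
Proof.
move=> [u1 [hu1 [H1|H1]]].
  by move=> _; exists u1; split => //; left => z h1 h2; left; apply: H1.
move=> [u2 [hu2 [H2|H2]]].
  by exists u2; split => //; left => z h1 h2; right; apply: H2.
have [m [m1 [m2 Em]]] := min_ex Hle u1 u2.
exists m; split; first by case: Em => ->.
right => z h1 h2 [].
  by apply: H1 => //; apply: (lt_le_trans Hle h2 m1).
by apply: H2 => //; apply: (lt_le_trans Hle h2 m2).
Qed.

Lemma Loc_empty Q a : (forall t, ~ Q t) -> Loc Q a.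
Proof.
by move=> H; exists (a + e0); split; [apply: (lt_addp Hle a He0) | right => z _ _; apply: H].
Qed.

Lemma Loc_pt p a : Loc (fun t => t = p) a.
Proof.
case: (pselect (lt a p)) => h.
  by exists p; split => //; right => z _ h2 e; subst; apply: (lt_irr h2).
exists (a + e0); split; first exact: (lt_addp Hle a He0).
right => z h1 _ e; subst; apply: h; exact: h1.
Qed.

Lemma Loc_iv iv a : Loc (inI iv) a.
Proof.
case: iv => o1 o2.
case: (pselect (exists b, o2 = Some b /\ le b a)) => [[b [E hb]]|N2].
  exists (a + e0); split; first exact: (lt_addp Hle a He0).
  right => z h1 _ [_]; rewrite E /= => h3.
  exact: (lt_irr (le:=le) (lt_trans Hle h3 (le_lt_trans Hle hb h1))).
case: (pselect (exists l, o1 = Some l /\ lt a l)) => [[l [E hl]]|N1].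
  exists l; split => //; right => z h1 h2 []; rewrite E /= => h3 _.
  exact: (lt_irr (lt_trans Hle h2 h3)).
exists (if o2 is Some b then b else a + e0); split.
  case E: o2 => [b|]; last exact: (lt_addp Hle a He0).
  by apply/(not_le Hle) => hb; apply: N2; exists b.
left => z h1 h2; split => /=.
  case E: o1 => [l|] //; apply: (le_lt_trans Hle _ h1).
  by apply/(not_lt Hle) => hl; apply: N1; exists l.
by case: o2 N2 h2.
Qed.

Lemma Loc_seq (ps : seq G) a : Loc (fun t => t \in ps) a.
Proof.
elim: ps => [|p ps IH]; first by apply: Loc_empty => t; rewrite in_nil.
apply: Loc_ext (Loc_or (Loc_pt p a) IH) => t.
by rewrite inE; split => [[->|->]|/orP [/eqP ->|]]; rewrite ?eqxx ?orbT //; [left|right].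
Qed.

Lemma Loc_ivs (ivs : seq (option G * option G)) a :
  Loc (fun t => exists2 iv, iv \in ivs & inI iv t) a.
Proof.
elim: ivs => [|iv ivs IH]; first by apply: Loc_empty => t [iv]; rewrite in_nil.
apply: Loc_ext (Loc_or (Loc_iv iv a) IH) => t; split.
  case=> [h|[iv' h1 h2]]; first by exists iv; rewrite ?inE ?eqxx.
  by exists iv' => //; rewrite inE h1 orbT.
move=> [iv']; rewrite inE => /orP [/eqP ->|h1 h2]; first by left.
by right; exists iv'.
Qed.

Lemma Loc_D1 P a : D1 P -> Loc P a.
Proof.
move=> /decomp [ps [ivs E]].
apply: Loc_ext (Loc_or (Loc_seq ps a) (Loc_ivs ivs a)) => t.
by split => /E.
Qed.

End Omin.


Section Glb.
Variable (G : zmodType) (le : G -> G -> Prop) (Hle : oag_order le) (S : ominimal_expansion le).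
Variable (e0 : G) (He0 : ltG le 0 e0).
Local Notation lt := (ltG le).
Local Notation D1 := (D1 S).
Local Notation D2 := (D2 S).

Definition Glb (Q : G -> Prop) a :=
  (forall t, Q t -> le a t) /\ (forall l, (forall t, Q t -> le l t) -> le l a).
Definition HasGlb Q := (exists t, Q t) -> (exists l, forall t, Q t -> le l t) ->
  exists a, Glb Q a.

Lemma HasGlb_ext Q Q' : (forall t, Q t <-> Q' t) -> HasGlb Q -> HasGlb Q'.
Proof.
move=> E H [t /E Ht] [l Hl].
have [a [h1 h2]] : exists a, Glb Q a.
  by apply: H; [exists t | exists l => u /E; apply: Hl].
exists a; split; first by move=> u /E; apply: h1.
by move=> l' Hl'; apply: h2 => u /E; apply: Hl'.
Qed.

Lemma HasGlb_empty Q : (forall t, ~ Q t) -> HasGlb Q.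
Proof. by move=> H [t /H]. Qed.

Lemma HasGlb_or Q1 Q2 : HasGlb Q1 -> HasGlb Q2 -> HasGlb (fun t => Q1 t \/ Q2 t).
Proof.
move=> H1 H2 Hne [l Hl].
have Hl1 : exists l, forall t, Q1 t -> le l t by exists l => t h; apply: Hl; left.
have Hl2 : exists l, forall t, Q2 t -> le l t by exists l => t h; apply: Hl; right.
case: (pselect (exists t, Q1 t)) => n1; case: (pselect (exists t, Q2 t)) => n2.
- have [a1 [g1 g1']] := H1 n1 Hl1; have [a2 [g2 g2']] := H2 n2 Hl2.
  have [m [m1 [m2 Em]]] := min_ex Hle a1 a2.
  exists m; split.
    by move=> t [h|h]; [apply: (le_trans Hle m1); apply: g1 | apply: (le_trans Hle m2); apply: g2].
  move=> l' Hl'.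
  have h1 : le l' a1 by apply: g1' => t h; apply: Hl'; left.
  have h2 : le l' a2 by apply: g2' => t h; apply: Hl'; right.
  by case: Em => ->.
- have [a1 [g1 g1']] := H1 n1 Hl1; exists a1; split.
    by move=> t [h|h]; [apply: g1 | exfalso; apply: n2; exists t].
  by move=> l' Hl'; apply: g1' => t h; apply: Hl'; left.
- have [a2 [g2 g2']] := H2 n2 Hl2; exists a2; split.
    by move=> t [h|h]; [exfalso; apply: n1; exists t | apply: g2].
  by move=> l' Hl'; apply: g2' => t h; apply: Hl'; right.
- by exfalso; case: Hne => t [h|h]; [apply: n1|apply: n2]; exists t.
Qed.

Lemma HasGlb_pt p : HasGlb (fun t => t = p).
Proof.
move=> _ _; exists p; split; first by move=> t ->; apply: le_refl.
by move=> l Hl; apply: Hl.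
Qed.

Lemma HasGlb_iv iv : HasGlb (inI le iv).
Proof.
case: iv => o1 o2 [t0 Ht0] [l0 Hl0].
case: o1 Ht0 Hl0 => [a0|] Ht0 Hl0; last first.
  exfalso; have hz : inI le (None, o2) (l0 - e0).
    split => //=; case: o2 Ht0 Hl0 => [b|] //= [_ hb] Hl0.
    apply: (lt_le_trans Hle (lt_subp Hle l0 He0)).
    by apply: (le_trans Hle (Hl0 _ _)) (lt_le hb); split.
  exact: (lt_irr (le:=le) (lt_le_trans Hle (lt_subp Hle l0 He0) (Hl0 _ hz))).
exists a0; split; first by move=> t [h _]; apply: lt_le.
move=> l Hl; apply/(not_lt Hle) => hl.
have [m [m1 [m2 Em]]] := min_ex Hle l t0.
have ham : lt a0 m by case: Em => ->; [|case: Ht0].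
have [z [hz1 hz2]] := dense Hle S ham.
have hz : inI le (Some a0, o2) z.
  split => //=; case: o2 Ht0 Hl {Hl0} => [b|] //= [_ hb] _.
  exact: (lt_trans Hle (lt_le_trans Hle hz2 m2) hb).
exact: (lt_irr (le:=le) (lt_le_trans Hle (lt_le_trans Hle hz2 m1) (Hl _ hz))).
Qed.

Lemma HasGlb_seq (ps : seq G) : HasGlb (fun t => t \in ps).
Proof.
elim: ps => [|p ps IH]; first by apply: HasGlb_empty => t; rewrite in_nil.
refine (HasGlb_ext _ (HasGlb_or (HasGlb_pt (p:=p)) IH)); move=> t.
by rewrite inE; split => [[->|->]|/orP [/eqP ->|]]; rewrite ?eqxx ?orbT //; [left|right].
Qed.

Lemma HasGlb_ivs (ivs : seq (option G * option G)) :
  HasGlb (fun t => exists2 iv, iv \in ivs & inI le iv t).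
Proof.
elim: ivs => [|iv ivs IH]; first by apply: HasGlb_empty => t [iv]; rewrite in_nil.
refine (HasGlb_ext _ (HasGlb_or (HasGlb_iv (iv:=iv)) IH)); move=> t; split.
  case=> [h|[iv' h1 h2]]; first by exists iv; rewrite ?inE ?eqxx.
  by exists iv' => //; rewrite inE h1 orbT.
move=> [iv']; rewrite inE => /orP [/eqP ->|h1 h2]; first by left.
by right; exists iv'.
Qed.

Lemma glb_ex P : D1 P -> HasGlb P.
Proof.
move=> HP; have [ps [ivs E]] := decomp Hle HP.
refine (HasGlb_ext _ (HasGlb_or (HasGlb_seq (ps:=ps)) (HasGlb_ivs (ivs:=ivs)))); move=> t.
by split => /E.
Qed.

Lemma Glb_unique Q a a' : Glb Q a -> Glb Q a' -> a = a'.
Proof.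
move=> [h1 h2] [h1' h2']; apply: (le_anti Hle); [apply: h2' | apply: h2] => //.
Qed.

Lemma glb_not_att P a : D1 P -> Glb P a -> ~ P a ->
  exists u, lt a u /\ forall z, lt a z -> lt z u -> P z.
Proof.
move=> HP [g1 g2] Pa.
have [u [hu [H|H]]] := Loc_D1 Hle He0 a HP; first by exists u.
exfalso; apply: (lt_irr (le:=le) (lt_le_trans Hle hu _)); apply: g2 => t Pt.
apply/(not_lt Hle) => htu.
have hat : lt a t by split; [apply: g1 | by move=> e; subst].
exact: (H t hat htu Pt).
Qed.

Definition Lub (Q : G -> Prop) s :=
  (forall t, Q t -> le t s) /\ (forall l, (forall t, Q t -> le t l) -> le s l).

Lemma Lub_unique Q a a' : Lub Q a -> Lub Q a' -> a = a'.
Proof.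
move=> [h1 h2] [h1' h2']; apply: (le_anti Hle); [apply: h2 | apply: h2'] => //.
Qed.

Lemma D1_neg P : D1 P -> D1 (fun t => P (- t)).
Proof.
move=> HP.
apply: (@D1_fm _ _ S _ (FEx 5 (FEx 6 (FAnd (aConst S 6 0) (FAnd (aAdd S 0 5 6) (aR1 HP 5)))))).
move=> t /=; split.
  move=> [u [z]]; rewrite /upd /= => -[-> [h Pu]].
  by move/eqP: h; rewrite addrC addr_eq0 => /eqP E; rewrite -E.
by move=> Pt; exists (- t), 0; rewrite /upd /=; do !split => //; rewrite subrr.
Qed.

Lemma lub_ex P : D1 P -> (exists t, P t) -> (exists B, forall t, P t -> le t B) ->
  exists s, Lub P s.
Proof.
move=> HP [t Pt] [B HB].
have [a [g1 g2]] : exists a, Glb (fun t => P (- t)) a.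
  apply: (glb_ex (D1_neg HP)); first by exists (- t); rewrite opprK.
  by exists (- B) => u Pu; rewrite -[u]opprK; apply: (le_opp Hle); apply: HB.
exists (- a); split.
  by move=> u Pu; rewrite -[u]opprK; apply: (le_opp Hle); apply: g1; rewrite opprK.
move=> l Hl; rewrite -[l]opprK; apply: (le_opp Hle); apply: g2 => u Pu.
by rewrite -[u]opprK; apply: (le_opp Hle); apply: Hl.
Qed.

End Glb.


Section Stage.
Variable (G : zmodType) (le : G -> G -> Prop) (Hle : oag_order le) (S : ominimal_expansion le).
Variable (e0 : G) (He0 : ltG le 0 e0).
Local Notation lt := (ltG le).
Local Notation D1 := (D1 S).
Local Notation D2 := (D2 S).

Definition GOAL := exists D : set (pt G 1),
    definable S D /\ bounded_set le D /\
    exists g : pt G 1 -> pt G 1,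
      definable_bijection S (open_ray_right le 0) D g.

Lemma goal_of (Q : G -> G -> Prop) (h : G -> G) (c b b' : G) : D2 Q ->
  (forall t, lt c t -> Q t (h t)) ->
  (forall t a a', Q t a -> Q t a' -> a = a') ->
  (forall t s, lt c t -> lt c s -> h t = h s -> t = s) ->
  (forall t, lt c t -> le b (h t) /\ le (h t) b') -> GOAL.
Proof.
move=> HQ Hh Hf Hinj Hb.
have hc : forall x, lt 0 x -> lt c (x + c).
  by move=> x hx; have := lt_add2r Hle c hx; rewrite add0r.
exists [set y : pt G 1 | exists t, lt c t /\ Q t (y ord0)]; split.
  apply: (@D1_fm _ _ S (fun a => exists t, lt c t /\ Q t a) (FEx 5 (FAnd (FEx 6 (FAnd (aConst S 6 c) (aLt S 6 5))) (aR2 HQ 5 0)))).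
  move=> t /=; split.
    by move=> [u [[z]]]; rewrite /upd /= => -[-> h1 h2]; exists u.
  by move=> [u [h1 h2]]; exists u; split => //; exists c.
split.
  exists b, b' => y [t [ht Hq]] i; rewrite ord1.
  by rewrite (Hf _ _ _ Hq (Hh _ ht)); apply: Hb.
exists (fun x => pt1 (h (x ord0 + c))); split; last split.
- have HR : D2 (fun t u => lt 0 t /\ Q (t + c) u).
    apply: (@D2_fm _ _ S _ (FAnd (FEx 5 (FAnd (aConst S 5 0) (aLt S 5 0)))
       (FEx 6 (FEx 7 (FAnd (aConst S 6 c) (FAnd (aAdd S 0 6 7) (aR2 HQ 7 1))))))).
    move=> t u /=; split.
      move=> [[z]]; rewrite /upd /= => -[-> h1] [a [a']] /= [-> [<- h2]].
      by split.
    by move=> [h1 h2]; split; [exists 0 | exists c, (t + c)].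
  rewrite /graph_on; apply: Dfn_ext HR => w; split.
    move=> [h1 h2]; exists (pt1 (w ord0)) => //.
    apply: funext => i; case: (ltnP i 1) => hi.
      have E1 : vcat (pt1 (w ord0)) (pt1 (h (pt1 (w ord0) ord0 + c))) i = w ord0.
        by rewrite (vcat_vl (Ordinal hi)).
      by rewrite E1; congr w; apply: val_inj => /=; move: hi; rewrite ltnS leqn0 => /eqP.
    have h0 : (0 < 1)%N by [].
    have E1 : vcat (pt1 (w ord0)) (pt1 (h (pt1 (w ord0) ord0 + c))) i = h (w ord0 + c).
      by rewrite (vcat_vr (Ordinal h0)) //=; have := ltn_ord i; lia.
    rewrite E1 -(Hf _ _ _ h2 (Hh _ (hc _ h1))); congr w.
    by apply: val_inj => /=; apply/eqP; rewrite eqn_leq hi andbT -ltnS (ltn_ord i).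
  move=> [x hx ->]; split.
    by rewrite (vcat_vl ord0).
  rewrite (vcat_vl ord0) // (vcat_vr ord0) //.
  exact: Hh (hc _ hx).
- move=> x y; rewrite !in_setE /open_ray_right /= => hx hy E.
  have E2 := congr1 (fun p => p ord0) E; rewrite /pt1 /= in E2.
  have := Hinj _ _ (hc _ hx) (hc _ hy) E2 => /addIr E3.
  by rewrite (pt1_eta x) (pt1_eta y) E3.
- apply/seteqP; split.
    move=> y [x hx <-] /=; exists (x ord0 + c); split; first exact: hc.
    exact: Hh (hc _ hx).
  move=> y [t [ht Hq]]; exists (pt1 (t - c)).
    by rewrite /open_ray_right /= /pt1; exact: (lt_0sub Hle ht).
  rewrite /pt1 subrK (pt1_eta y) (Hf _ _ _ Hq (Hh _ ht)).
  by apply: funext.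
Qed.


Lemma D2_Glb (R : G -> G -> Prop) : D2 R -> D2 (fun t a => Glb le (fun y => R y t) a).
Proof.
move=> HR.
apply: (@D2_fm _ _ S _ (FAnd (FAll 5 (FImp (aR2 HR 5 0) (FNeg (aLt S 5 1))))
  (FAll 6 (FImp (FAll 7 (FImp (aR2 HR 7 0) (FNeg (aLt S 7 6)))) (FNeg (aLt S 1 6)))))).
move=> t a; rewrite /= /upd /=; split.
  move=> [H1 H2]; split.
    by move=> z Rz; apply/(not_lt Hle); exact: H1 z Rz.
  move=> l Hl; apply/(not_lt Hle); apply: H2 => z Rz; apply/(not_lt Hle); exact: Hl z Rz.
move=> [g1 g2]; split.
  by move=> z Rz; apply/(not_lt Hle); exact: g1.
move=> l Hl; apply/(not_lt Hle); apply: g2 => z Rz; apply/(not_lt Hle); exact: Hl z Rz.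
Qed.

Lemma D2_Lub (R : G -> G -> Prop) : D2 R -> D2 (fun y s => Lub le (R y) s).
Proof.
move=> HR.
apply: (@D2_fm _ _ S _ (FAnd (FAll 5 (FImp (aR2 HR 0 5) (FNeg (aLt S 1 5))))
  (FAll 6 (FImp (FAll 7 (FImp (aR2 HR 0 7) (FNeg (aLt S 6 7)))) (FNeg (aLt S 6 1)))))).
move=> y s; rewrite /= /upd /=; split.
  move=> [H1 H2]; split.
    by move=> z Rz; apply/(not_lt Hle); exact: H1 z Rz.
  move=> l Hl; apply/(not_lt Hle); apply: H2 => z Rz; apply/(not_lt Hle); exact: Hl z Rz.
move=> [g1 g2]; split.
  by move=> z Rz; apply/(not_lt Hle); exact: g1.
move=> l Hl; apply/(not_lt Hle); apply: g2 => z Rz; apply/(not_lt Hle); exact: Hl z Rz.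
Qed.

Lemma stage1 (R : G -> G -> Prop) (b b' c : G) : D2 R ->
  (forall y t t', R y t -> R y t' -> t = t') ->
  (forall y t, R y t -> le b y /\ le y b') ->
  (forall t, lt c t -> exists y, R y t) -> GOAL.
Proof.
move=> HR Hf Hb Hc.
pose Gl := fun t a => Glb le (fun y => R y t) a.
have HGl : D2 Gl := D2_Glb HR.
have Gex : forall t, lt c t -> exists a, Gl t a.
  move=> t ht; apply: (glb_ex Hle He0 (D2_fix2 HR t)); first exact: Hc t ht.
  by exists b => y /Hb [].
pose h := fun t => xget 0 (Gl t).
have Hh : forall t, lt c t -> Gl t (h t) := fun t ht => xgetPex 0 (Gex t ht).
have Hfun : forall t a a', Gl t a -> Gl t a' -> a = a'.
  by move=> t a a'; apply: Glb_unique.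
have Hbd : forall t, lt c t -> le b (h t) /\ le (h t) b'.
  move=> t ht; have [g1 g2] := Hh t ht; split.
    by apply: g2 => y /Hb [].
  have [y Hy] := Hc t ht; apply: (le_trans Hle (g1 _ Hy)); exact: (proj2 (Hb _ _ Hy)).
pose Att := fun t => exists a, Gl t a /\ R a t.
have HAtt : D1 Att.
  apply: (@D1_fm _ _ S _ (FEx 8 (FAnd (aR2 HGl 0 8) (aR2 HR 8 0)))).
  by move=> t; rewrite /= /upd /=.
case: (ray_or_bdd Hle HAtt) => [[c1 Hc1]|[B HB]].
  have [c' [m1 [m2 _]]] := max_ex Hle c c1.
  apply: (goal_of (h := h) (c := c') (b := b) (b' := b') HGl).
  - by move=> t ht; apply: Hh; exact: (le_lt_trans Hle m1 ht).
  - exact: Hfun.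
  - move=> t s ht hs E.
    have ht1 := le_lt_trans Hle m1 ht; have hs1 := le_lt_trans Hle m1 hs.
    have [a [ga Ra]] := Hc1 t (le_lt_trans Hle m2 ht).
    have [a' [ga' Ra']] := Hc1 s (le_lt_trans Hle m2 hs).
    have e1 : a = h t := Hfun _ _ _ ga (Hh t ht1).
    have e2 : a' = h s := Hfun _ _ _ ga' (Hh s hs1).
    by apply: (Hf a) => //; rewrite e1 E -e2.
  - by move=> t ht; apply: Hbd (le_lt_trans Hle m1 ht).
have [c' [m1 [m2 _]]] := max_ex Hle c B.
apply: (goal_of (h := h) (c := c') (b := b) (b' := b') HGl).
- by move=> t ht; apply: Hh; exact: (le_lt_trans Hle m1 ht).
- exact: Hfun.
- have nbhd : forall t, lt c' t -> exists u, lt (h t) u /\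
       forall z, lt (h t) z -> lt z u -> R z t.
    move=> t ht; apply: (glb_not_att Hle He0 (D2_fix2 HR t)).
      exact: Hh (le_lt_trans Hle m1 ht).
    move=> Ra; have hAtt : Att t.
      by exists (h t); split => //; apply: Hh (le_lt_trans Hle m1 ht).
    have h3 := HB t hAtt.
    exact: (lt_irr (lt_le_trans Hle (le_lt_trans Hle m2 ht) h3)).
  move=> t s ht hs E.
  have [u1 [hu1 H1]] := nbhd t ht; have [u2 [hu2 H2]] := nbhd s hs.
  rewrite -E in hu2 H2.
  have [m [mu1 [mu2 Em]]] := min_ex Hle u1 u2.
  have hm : lt (h t) m by case: Em => ->.
  have [z [hz1 hz2]] := dense Hle S hm.
  apply: (Hf z); first exact: H1 hz1 (lt_le_trans Hle hz2 mu1).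
  exact: H2 hz1 (lt_le_trans Hle hz2 mu2).
- by move=> t ht; apply: Hbd (le_lt_trans Hle m1 ht).
Qed.

End Stage.


Section Key.
Variable (G : zmodType) (le : G -> G -> Prop) (Hle : oag_order le) (S : ominimal_expansion le).
Variable (e0 : G) (He0 : ltG le 0 e0).
Local Notation lt := (ltG le).
Local Notation D1 := (D1 S).
Local Notation D2 := (D2 S).
Local Notation GOAL := (GOAL S).

Lemma Dfn_vcons_param n (P : pt G n.+1 -> Prop) a : Dfn S P ->
  Dfn S (fun w : pt G n => P (vcons a w)).
Proof.
move=> HP.
pose s := fun i : 'I_n.+1 => match unlift ord0 i with None => ord_max | Some j => lift ord_max j end.
have H1 : Dfn S (fun u : pt G n.+1 => u ord_max = a /\ P (fun i => u (s i))).
  apply: Dfn_and; first exact: (Dfn_subst (fun _ : 'I_1 => ord_max) (D_const S a)).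
  exact: Dfn_subst.
apply: Dfn_ext (Dfn_proj H1) => w.
have ID : forall c, (fun i => vsnoc w c (s i)) = vcons c w.
  move=> c; apply: funext => i; rewrite /s /vcons.
  by case: (unlift ord0 i) => [j|]; [exact: vsnoc_lift | exact: vsnoc_max].
split; first by move=> [c []]; rewrite vsnoc_max ID => ->.
by move=> h; exists a; rewrite vsnoc_max ID.
Qed.

Lemma key n : forall (R : pt G n -> G -> Prop) (b b' : G),
  Dfn S (fun w : pt G n.+1 => R (fun j => w (lift ord_max j)) (w ord_max)) ->
  (forall x t t', R x t -> R x t' -> t = t') ->
  (forall x t, R x t -> forall i, le b (x i) /\ le (x i) b') ->
  (forall B, exists x t, R x t /\ lt B t) -> GOAL.
Proof.
elim: n => [|n IH] R b b' HR Hf Hb Hub.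
  have [x0 [t0 [R0 _]]] := Hub 0.
  have [x [t [Rx ht]]] := Hub t0.
  have ex : x = x0 by apply: funext => -[].
  rewrite ex in Rx; rewrite (Hf _ _ _ Rx R0) in ht.
  by exfalso; apply: (lt_irr ht).
pose I2 := fun y1 t => exists x' : pt G n, R (vcons y1 x') t.
have HI2 : D2 I2.
  pose s : 'I_n.+2 -> 'I_(2 + n) := fun i => match unlift ord_max i with
    | None => lshift n ord_max
    | Some i' => match unlift ord0 i' with None => lshift n ord0 | Some j => rshift 2 j end end.
  have H1 := Dfn_projn (Dfn_subst s HR).
  apply: Dfn_ext H1 => w /=.
  have ID1 : forall x', (fun j => vcat w x' (s (lift ord_max j))) = vcons (w ord0) x'.
    move=> x'; apply: funext => j; rewrite /s liftK /vcons.
    by case: (unlift ord0 j) => [k|]; [exact: vcat_r | exact: vcat_l].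
  have ID2 : forall x', vcat w x' (s ord_max) = w ord_max.
    by move=> x'; rewrite /s unlift_none vcat_l.
  by split => -[x' H]; exists x'; move: H; rewrite ID1 ID2.
case: (pselect (exists y1, forall B, exists t, I2 y1 t /\ lt B t)) => [[y1 Hy1]|Hno].
  apply: (IH (fun x' t => R (vcons y1 x') t) b b').
  - apply: Dfn_ext (Dfn_vcons_param y1 HR) => w.
    have J1 : (fun j => vcons y1 w (lift ord_max j)) = vcons y1 (fun j => w (lift ord_max j)).
      apply: funext => j; case: (unliftP ord0 j) => [j' ->|->].
        rewrite vcons_lift.
        have -> : lift ord_max (lift ord0 j') = lift ord0 (lift ord_max j') :> 'I_n.+2.
          by apply: val_inj => /=; rewrite /bump; have := ltn_ord j'; lia.
        by rewrite vcons_lift.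
      have -> : lift ord_max ord0 = ord0 :> 'I_n.+2 by apply: val_inj.
      by rewrite !vcons0.
    have J2 : vcons y1 w ord_max = w ord_max.
      have -> : ord_max = lift ord0 (ord_max : 'I_n.+1) :> 'I_n.+2 by apply: val_inj.
      by rewrite vcons_lift.
    by rewrite J1 J2.
  - by move=> x t t'; apply: Hf.
  - by move=> x t Rx i; have := Hb _ _ Rx (lift ord0 i); rewrite vcons_lift.
  - by move=> B; have [t [[x' Rx] ht]] := Hy1 B; exists x', t.
have Hbd : forall y1, exists B, forall t, I2 y1 t -> le t B.
  move=> y1; apply: contrapT => h; apply: Hno; exists y1 => B; apply: contrapT => h2.
  apply: h; exists B => t It; apply/(not_lt Hle) => hBt; apply: h2; by exists t.
pose S1 := fun y1 u => (exists t, I2 y1 t) /\ Lub le (I2 y1) u.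
have HS1 : D2 S1.
  apply: (@D2_fm _ _ S S1 (FAnd (FEx 5 (aR2 HI2 0 5)) (aR2 (D2_Lub Hle HI2) 0 1))).
  by move=> y u; rewrite /= /upd /=.
have Lex : forall y1, (exists t, I2 y1 t) -> exists u, S1 y1 u.
  move=> y1 ne; have [u Hu] := lub_ex Hle He0 (D2_fix1 HI2 y1) ne (Hbd y1).
  by exists u.
have [c Hc] : exists c, forall u, lt c u -> exists y, S1 y u.
  apply: (ray Hle (P := fun u => exists y, S1 y u)).
    apply: (@D1_fm _ _ S (fun u => exists y, S1 y u) (FEx 5 (aR2 HS1 5 0))).
    by move=> u; rewrite /= /upd /=.
  move=> B; have [x [t [Rx ht]]] := Hub B.
  have It : I2 (x ord0) t by exists (fun i => x (lift ord0 i)); rewrite -vcons_eta.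
  have [u Hu] := Lex (x ord0) (ex_intro _ t It).
  exists u; split; first by exists (x ord0).
  exact: (lt_le_trans Hle ht (proj1 (proj2 Hu) t It)).
apply: (stage1 Hle He0 (R := S1) (b := b) (b' := b') (c := c) HS1).
- by move=> y u u' [_ l1] [_ l2]; apply: (Lub_unique Hle l1 l2).
- by move=> y u [[t [x' Rx]] _]; have := Hb _ _ Rx ord0; rewrite vcons0.
- exact: Hc.
Qed.

End Key.

Unset Implicit Arguments. Set Strict Implicit. Set Printing Implicit Defensive.

Lemma fin_ub (G : zmodType) (le : G -> G -> Prop) (Hle : oag_order le) (m : nat)
  (Q : 'I_m -> G -> Prop) :
  (forall i B B', Q i B -> le B B' -> Q i B') -> (forall i, exists B, Q i B) ->
  exists B, forall i, Q i B.
Proof.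
move=> Hmono Hex.
suff [B HB] : exists B, forall i, i \in enum 'I_m -> Q i B.
  by exists B => i; apply: HB; rewrite mem_enum.
elim: (enum 'I_m) => [|a s [B1 H1]]; first by exists 0 => i; rewrite in_nil.
have [B2 H2] := Hex a.
have [z [h1 [h2 _]]] := max_ex Hle B1 B2.
exists z => i; rewrite inE => /orP [/eqP ->|hi].
  exact: Hmono H2 h2.
exact: Hmono (H1 _ hi) h1.
Qed.

Lemma vcat_inj (G : zmodType) m n (x x' : pt G m) (y y' : pt G n) :
  vcat x y = vcat x' y' -> x = x' /\ y = y'.
Proof.
move=> E; split; apply: funext => j.
  by have := congr1 (fun z => z (lshift n j)) E; rewrite /= !vcat_l.
by have := congr1 (fun z => z (rshift m j)) E; rewrite /= !vcat_r.
Qed.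

Theorem proposition3p5 (G : zmodType) (le : G -> G -> Prop)
  (Hle : oag_order le) (S : ominimal_expansion le)
  (m n : nat) (M : set (pt G m)) (N : set (pt G n)) :
  definable S M -> ~ bounded_set le M ->
  definable S N -> bounded_set le N ->
  (exists f : pt G m -> pt G n, definable_bijection S M N f) ->
  exists D : set (pt G 1),
    definable S D /\ bounded_set le D /\
    exists g : pt G 1 -> pt G 1,
      definable_bijection S (open_ray_right le 0) D g.
Proof.
move=> hM hMub hN [b [b' hNb]] [f [hgraph [hinj himg]]].
have [i [sg Hi]] : exists (i : 'I_m) (sg : bool), forall B, exists x, M x /\
    ltG le B (if sg then x i else - x i).
  apply: contrapT => H; apply: hMub.
  have Hup : forall i, exists B, forall x, M x -> le (x i) B.
    move=> i; apply: contrapT => h; apply: H; exists i, true => B; apply: contrapT => h2.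
    apply: h; exists B => x Mx; apply/(not_lt Hle) => hb; apply: h2; by exists x.
  have Hlow : forall i, exists B, forall x, M x -> le (- x i) B.
    move=> i; apply: contrapT => h; apply: H; exists i, false => B; apply: contrapT => h2.
    apply: h; exists B => x Mx; apply/(not_lt Hle) => hb; apply: h2; by exists x.
  have [B1 HB1] := fin_ub _ _ Hle _ (fun i B => forall x, M x -> le (x i) B)
    (fun i B B' h hB x Mx => le_trans Hle (h x Mx) hB) Hup.
  have [B2 HB2] := fin_ub _ _ Hle _ (fun i B => forall x, M x -> le (- x i) B)
    (fun i B B' h hB x Mx => le_trans Hle (h x Mx) hB) Hlow.
  exists (- B2), B1 => x Mx j; split; last exact: HB1.
  by have := le_opp Hle (HB2 j x Mx); rewrite opprK.
have [x0 [_ He0]] := Hi 0.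
pose R0 := fun (y : pt G n) t => exists x, M x /\ f x = y /\ t = (if sg then x i else - x i).
have HR0 : Dfn S (fun w : pt G n.+1 => R0 (fun j => w (lift ord_max j)) (w ord_max)).
  pose s : 'I_(m + n) -> 'I_(n.+1 + m) := fun k => match split k with
    | inl j => rshift n.+1 j | inr j => lshift m (lift ord_max j) end.
  have Hsg : Dfn S (fun u : pt G (n.+1 + m) => u (lshift m ord_max) =
      (if sg then u (rshift n.+1 i) else - u (rshift n.+1 i))).
    case: (sg); first exact: Dfn_diag.
    pose r := fun j : nat => if j == 0%N then lshift m ord_max else rshift n.+1 i.
    apply: Dfn_ext (fm_dfn (FEx 5 (FAnd (aConst S 5 0) (aAdd S 0 1 5))) r) => u.
    rewrite /= /upd /r /=; split.
      by move=> [z [-> h]]; move/eqP: h; rewrite addr_eq0 => /eqP.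
    by move=> h; exists 0; split => //; rewrite h addNr.
  have HQ := Dfn_and (Dfn_subst s (P := graph_on M f) hgraph) Hsg.
  apply: Dfn_ext (Dfn_projn HQ) => w /=.
  have ID : forall x, (fun k => vcat w x (s k)) = vcat x (fun j => w (lift ord_max j)).
    move=> x; apply: funext => k; rewrite /s [X in _ = X]/vcat.
    by case: (split k) => j; [exact: vcat_r | exact: vcat_l].
  split.
    move=> [x []]; rewrite ID vcat_l vcat_r => -[x' Mx' /vcat_inj [Ex Ey]] E.
    by exists x'; split => //; split; [rewrite -Ey | rewrite E Ex].
  move=> [x [Mx [fx E]]]; exists x; rewrite ID vcat_l vcat_r; split => //.
  by exists x => //; rewrite fx.
apply: (key Hle He0 (R := R0) (b := b) (b' := b') HR0).
- move=> y t t' [x [Mx [fx ->]]] [x' [Mx' [fx' ->]]].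
  have E : x = x' by apply: hinj; rewrite ?in_setE // fx fx'.
  by rewrite E.
- move=> y t [x [Mx [<- _]]] j; apply: hNb; rewrite -himg; by exists x.
- move=> B; have [x [Mx h]] := Hi B.
  by exists (f x), (if sg then x i else - x i); split => //; exists x.
Qed.
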